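(* Let $(G,s,t)$ be an oriented serial superedge with principal subgraphs $(G_1,s_1,t_1),\dots,(G_k,s_k,t_k)$ (so $s_1=s$, $t_i=s_{i+1}$, $t_k=t$), each $G_i$ non-parallel. For each $i$ let $\mathcal{T}_i$ contain exactly one spanning tree from each orbit of $\mathsf{ST}(G_i)$ under $\mathrm{Aut}_{\mathrm{or}}(G_i,s_i,t_i)$, and let $\mathcal{N}_i$ contain exactly one near tree from each orbit of $\mathsf{NT}(G_i)$ under $\mathrm{Aut}_{\mathrm{or}}(G_i,s_i,t_i)$. Then the set of all subgraphs $F_1\cup\dots\cup F_k$ such that, for some $j\in\{1,\dots,k\}$, $F_j\in\mathcal{N}_j$ and $F_i\in\mathcal{T}_i$ for all $i\neq j$, consists of near trees of $G$ and contains exactly one near tree from each orbit of $\mathsf{NT}(G)$ under $\mathrm{Aut}_{\mathrm{or}}(G,s,t)$.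
   Context: All graphs are finite, simple and undirected. An oriented series-parallel graph is a triple $(G,s,t)$ where $G$ is a graph and $s\neq t$ are vertices, defined recursively: (i) $G$ is a single edge with vertex set $\{s,t\}$; or (ii) (serial superedge) there are $k\ge 2$ oriented series-parallel graphs $(G_1,s_1,t_1),\dots,(G_k,s_k,t_k)$ with $s_1=s$, $t_k=t$, $t_i=s_{i+1}$ for $1\le i<k$, $V(G_i)\cap V(G_{i+1})=\{s_{i+1}\}$, $V(G_i)\cap V(G_j)=\emptyset$ for $|i-j|\ge2$, and $G=G_1\cup\dots\cup G_k$; or (iii) (parallel superedge) there are $k\ge2$ oriented series-parallel graphs $(G_1,s,t),\dots,(G_k,s,t)$ with $V(G_i)\cap V(G_j)=\{s,t\}$ for $i\neq j$ and $G=G_1\cup\dots\cup G_k$. The $G_i$ are the principal subgraphs. A graph is non-parallel if it is not a parallel superedge. For an oriented series-parallel graph $(H,u,v)$, $\mathrm{Aut}_{\mathrm{or}}(H,u,v)$ is the group of automorphisms of $H$ fixing $u$ and $v$, acting on subgraphs of $H$; $\mathsf{ST}(H)$ is the set of spanning trees of $H$; a near tree of $H$ is a spanning subgraph obtained from a spanning tree of $H$ by deleting one edge (equivalently an acyclic spanning subgraph with $|V(H)|-2$ edges), and $\mathsf{NT}(H)$ is the set of near trees. Two subgraphs $A,B$ are in the same orbit iff $A=\sigma(B)$ for some $\sigma$ in the group. *)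

(* Defs.v *)
From mathcomp Require Import all_boot fingroup perm.
Set Implicit Arguments. Unset Strict Implicit. Unset Printing Implicit Defensive.

Section SP.
Variable V : finType.

(* A finite simple graph on (a subset of) the vertex type V:
   a vertex set and a set of edges, each edge a set {x,y} of vertices. *)
Record graph := Graph { gV : {set V}; gE : {set {set V}} }.

Definition graph_union (G : graph) (k : nat) (Gs : nat -> graph) : Prop :=
  gV G = \bigcup_(i < k) gV (Gs i) /\ gE G = \bigcup_(i < k) gE (Gs i).

(* intersection conditions of a serial superedge with terminals
   xs 0, xs 1, ..., xs k  (G_i has terminals xs i, xs i.+1) *)
Definition serial_cond (k : nat) (Gs : nat -> graph) (xs : nat -> V) : Prop :=
  (forall i, i.+1 < k -> gV (Gs i) :&: gV (Gs i.+1) = [set xs i.+1]) /\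
  (forall i j, i < k -> j < k -> i.+1 < j -> gV (Gs i) :&: gV (Gs j) = set0).

(* intersection conditions of a parallel superedge; principal subgraphs
   are taken to be edge-disjoint *)
Definition parallel_cond (k : nat) (Gs : nat -> graph) (s t : V) : Prop :=
  forall i j, i < k -> j < k -> i != j ->
    gV (Gs i) :&: gV (Gs j) = [set s; t] /\ gE (Gs i) :&: gE (Gs j) = set0.

Inductive osp : graph -> V -> V -> Prop :=
| osp_edge (s t : V) : s != t -> osp (Graph [set s; t] [set [set s; t]]) s t
| osp_serial (G : graph) (s t : V) (k : nat) (Gs : nat -> graph) (xs : nat -> V) :
    2 <= k -> xs 0 = s -> xs k = t ->
    (forall i, i < k -> osp (Gs i) (xs i) (xs i.+1)) ->
    serial_cond k Gs xs -> graph_union G k Gs -> osp G s t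
| osp_parallel (G : graph) (s t : V) (k : nat) (Gs : nat -> graph) :
    2 <= k -> (forall i, i < k -> osp (Gs i) s t) ->
    parallel_cond k Gs s t -> graph_union G k Gs -> osp G s t.

Definition is_parallel (G : graph) (s t : V) : Prop :=
  exists (k : nat) (Gs : nat -> graph), 2 <= k /\
    (forall i, i < k -> osp (Gs i) s t) /\
    parallel_cond k Gs s t /\ graph_union G k Gs.

(* Spanning subgraphs of H are represented by their edge sets F. *)
Definition adj (F : {set {set V}}) : rel V := fun x y => [set x; y] \in F.

Definition acyclic (F : {set {set V}}) : Prop :=
  forall e, e \in F -> forall x y, e = [set x; y] -> x != y ->
    ~~ connect (adj (F :\ e)) x y.

Definition spanning_tree (H : graph) (F : {set {set V}}) : Prop :=
  F \subset gE H /\ acyclic F /\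
  (forall x y, x \in gV H -> y \in gV H -> connect (adj F) x y).

Definition near_tree (H : graph) (F : {set {set V}}) : Prop :=
  exists T e, spanning_tree H T /\ e \in T /\ F = T :\ e.

(* automorphisms of H fixing u and v (a permutation of V preserving V(H)
   and E(H); its values outside V(H) are irrelevant) *)
Definition aut_or (H : graph) (u v : V) (sigma : {perm V}) : Prop :=
  sigma @: gV H = gV H /\ [set sigma @: e | e : {set V} in gE H] = gE H /\
  sigma u = u /\ sigma v = v.

Definition act_sub (sigma : {perm V}) (F : {set {set V}}) : {set {set V}} :=
  [set sigma @: e | e : {set V} in F].

Definition same_orbit (H : graph) (u v : V) (A B : {set {set V}}) : Prop :=
  exists sigma, aut_or H u v sigma /\ A = act_sub sigma B.

Definition orbit_transversal (H : graph) (u v : V)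
    (S P : {set {set V}} -> Prop) : Prop :=
  (forall F, S F -> P F) /\
  (forall F, P F -> exists! X, S X /\ same_orbit H u v X F).

Definition combined (k : nat) (Ts Ns : nat -> {set {set V}} -> Prop)
    (X : {set {set V}}) : Prop :=
  exists j (F : nat -> {set {set V}}), j < k /\ Ns j (F j) /\
    (forall i, i < k -> i <> j -> Ts i (F i)) /\
    X = \bigcup_(i < k) F i.

End SP.

(* Main.v *)
Require Import Defs.
From mathcomp Require Import all_boot fingroup perm.
From mathcomp Require Import zify.
From Stdlib Require Import ClassicalEpsilon.
Set Implicit Arguments. Unset Strict Implicit. Unset Printing Implicit Defensive.

Lemma connect_hom (T1 T2 : finType) (e1 : rel T1) (e2 : rel T2) (f : T1 -> T2) :
  (forall x y, e1 x y -> connect e2 (f x) (f y)) ->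
  forall x y, connect e1 x y -> connect e2 (f x) (f y).
Proof.
move=> H x y /connectP [p]; elim: p x => [|z p IH] x /=; first by move=> _ ->.
case/andP=> exz pz ey; exact: connect_trans (H _ _ exz) (IH _ pz ey).
Qed.

Lemma connect_inv (T : finType) (e : rel T) (P : pred T) :
  (forall x y, e x y -> P x -> P y) -> forall x y, connect e x y -> P x -> P y.
Proof.
move=> H x y /connectP [p]; elim: p x => [|z p IH] x /=; first by move=> _ ->.
case/andP=> exz pz ey Px; exact: IH _ pz ey (H _ _ exz Px).
Qed.

Lemma chain (T : finType) (e : rel T) (xs : nat -> T) n :
  (forall m, m < n -> connect e (xs m) (xs m.+1)) ->
  forall b, b <= n -> connect e (xs 0) (xs b).
Proof.
move=> H; elim=> [|b IH] bn; first exact: connect0.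
exact: connect_trans (IH (ltnW bn)) (H _ bn).
Qed.

Section Gen.
Variable V : finType.
Implicit Types (E F T : {set {set V}}) (x y u v c : V).

Definition avoid E c : rel V := fun x y => adj E x y && (x != c) && (y != c).

Lemma set2C x y : [set x; y] = [set y; x].
Proof. exact: setUC. Qed.

Lemma adj_sym E : symmetric (adj E).
Proof. by move=> x y; rewrite /adj set2C. Qed.

Lemma avoid_sym E c : symmetric (avoid E c).
Proof. by move=> x y; rewrite /avoid adj_sym -andbA [(x != c) && _]andbC andbA. Qed.

Lemma connect_adjC E x y : connect (adj E) x y = connect (adj E) y x.
Proof. by apply: sym_connect_sym; apply: adj_sym. Qed.

Lemma connect_avoidC E c x y : connect (avoid E c) x y = connect (avoid E c) y x.
Proof. by apply: sym_connect_sym; apply: avoid_sym. Qed.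

Lemma adj_mono E1 E2 x y : E1 \subset E2 -> connect (adj E1) x y -> connect (adj E2) x y.
Proof.
move=> sE; apply: (connect_hom (f := id)) => a b h; apply: connect1.
exact: (subsetP sE).
Qed.

Lemma avoid_mono E1 E2 c x y : E1 \subset E2 ->
  connect (avoid E1 c) x y -> connect (avoid E2 c) x y.
Proof.
move=> sE; apply: (connect_hom (f := id)) => a b /andP [/andP [h1 h2] h3].
by apply: connect1; rewrite /avoid /adj h2 h3 !andbT (subsetP sE _ h1).
Qed.

Lemma avoid_adj E c x y : connect (avoid E c) x y -> connect (adj E) x y.
Proof.
apply: (connect_hom (f := id)) => a b /andP [/andP [h1 _] _].
exact: connect1.
Qed.

Record Q (H : graph V) (u v : V) : Prop := MkQ {
  Q_neq : u != v; Q_u : u \in gV H; Q_v : v \in gV H;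
  Q_edge : forall e, e \in gE H ->
     exists x y, [/\ x != y, e = [set x; y], x \in gV H & y \in gV H];
  Q_conn : forall x, x \in gV H -> connect (adj (gE H)) u x;
  Q_avl : forall x, x \in gV H -> x != v -> connect (avoid (gE H) v) u x;
  Q_avr : forall x, x \in gV H -> x != u -> connect (avoid (gE H) u) v x }.

Lemma Q_sym H u v : Q H u v -> Q H v u.
Proof.
case=> h1 h2 h3 h4 h5 h6 h7; split => //; first by rewrite eq_sym.
move=> x xV; apply: connect_trans (h5 _ xV).
by rewrite connect_adjC; apply: h5.
Qed.

Lemma Q_ends H u v x y : Q H u v -> [set x; y] \in gE H -> x \in gV H /\ y \in gV H.
Proof.
move=> hQ /(Q_edge hQ) [a [b [_ eq ha hb]]].
have hx : x \in [set a; b] by rewrite -eq set21.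
have hy : y \in [set a; b] by rewrite -eq set22.
by move: hx hy; rewrite !in_set2 => /orP [] /eqP -> /orP [] /eqP ->.
Qed.

Lemma Q_sub H u v e : Q H u v -> e \in gE H -> {subset e <= gV H}.
Proof.
move=> hQ /(Q_edge hQ) [a [b [_ -> ha hb]]] z.
by rewrite in_set2 => /orP [] /eqP ->.
Qed.

Lemma imset_pair (s : {perm V}) x y : s @: [set x; y] = [set s x; s y].
Proof. by rewrite imsetU1 imset_set1. Qed.

Lemma imset_permK (s : {perm V}) (A : {set V}) : (s^-1)%g @: (s @: A) = A.
Proof.
apply/setP => z; apply/imsetP/idP => [[w /imsetP [a aA ->] ->]|zA].
  by rewrite permK.
by exists (s z); rewrite ?permK // imset_f.
Qed.

Lemma act_subK (s : {perm V}) F : act_sub (s^-1)%g (act_sub s F) = F.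
Proof.
apply/setP => z; apply/imsetP/idP => [[w /imsetP [a aA ->] ->]|zA].
  by rewrite imset_permK.
by exists (s @: z); rewrite ?imset_permK // imset_f.
Qed.

Lemma aut_inv H u v s : aut_or H u v s -> aut_or H u v (s^-1)%g.
Proof.
case=> h1 [h2 [h3 h4]]; split; [|split; [|split]].
- by rewrite -{1}h1 imset_permK.
- by rewrite -{1}h2; exact: act_subK.
- by rewrite -{1}h3 permK.
- by rewrite -{1}h4 permK.
Qed.

Lemma aut_symm H u v s : aut_or H u v s -> aut_or H v u s.
Proof. by case=> ? [? [? ?]]; do !split. Qed.

Lemma aut_mapV H u v s x : aut_or H u v s -> x \in gV H -> s x \in gV H.
Proof. by case=> h1 _ xV; rewrite -h1 imset_f. Qed.

Lemma aut_mapE H u v s e : aut_or H u v s -> e \in gE H -> s @: e \in gE H.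
Proof. by case=> _ [h2 _] eE; rewrite -h2; apply/imsetP; exists e. Qed.

Lemma adj_act (s : {perm V}) F x y : adj F x y -> adj (act_sub s F) (s x) (s y).
Proof.
by rewrite /adj /act_sub -imset_pair => h; apply/imsetP; exists [set x; y].
Qed.

Lemma span_aut H u v s T : aut_or H u v s -> spanning_tree H T ->
  spanning_tree H (act_sub s T).
Proof.
move=> hA [sT [acT cT]]; split; [|split].
- apply/subsetP => z /imsetP [e eT ->]; apply: aut_mapE hA _.
  exact: (subsetP sT).
- move=> e1 /imsetP [e eT ->] x y exy xy; apply/negP => hc.
  have ee : e = [set (s^-1)%g x; (s^-1)%g y].
    by rewrite -imset_pair -exy imset_permK.
  have: (s^-1)%g x != (s^-1)%g y by rewrite (inj_eq perm_inj).
  move/(acT e eT _ _ ee)/negP; apply.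
  move: hc; apply: (connect_hom (f := fun z => (s^-1)%g z)) => a b.
  rewrite /adj !inE => /andP [nab /imsetP [f fT fe]].
  apply: connect1; rewrite !inE.
  have -> : [set (s^-1)%g a; (s^-1)%g b] = f by rewrite -imset_pair fe imset_permK.
  rewrite fT andbT; apply/eqP => fe'; move/eqP: nab; apply.
  by rewrite fe fe'.
- move=> x y xV yV.
  have hAi := aut_inv hA.
  have := cT _ _ (aut_mapV hAi xV) (aut_mapV hAi yV).
  move/(connect_hom (f := fun z => s z) (e2 := adj (act_sub s T))).
  rewrite !permKV; apply => a b; move/(adj_act s)=> h; exact: connect1.
Qed.

Lemma near_not_span H u v F : Q H u v -> near_tree H F -> spanning_tree H F -> False.
Proof.
move=> hQ [T [e [[sT [acT _]] [eT ->]]]] [_ [_ cF]].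
have [x [y [xy ee xV yV]]] := Q_edge hQ (subsetP sT _ eT).
by move: (acT e eT x y ee xy); rewrite cF.
Qed.

Lemma trans_uniq H u v (S P : {set {set V}} -> Prop) F X1 X2 :
  orbit_transversal H u v S P -> P F -> S X1 -> same_orbit H u v X1 F ->
  S X2 -> same_orbit H u v X2 F -> X1 = X2.
Proof.
move=> [_ hu] PF S1 o1 S2 o2.
have [X0 [_ hX0]] := hu F PF.
by rewrite -(hX0 X1 (conj S1 o1)) (hX0 X2 (conj S2 o2)).
Qed.

End Gen.


Section Serial.
Variable V : finType.
Variables (G : graph V) (k : nat) (Gs : nat -> graph V) (xs : nat -> V).
Hypotheses (HQ : forall i, i < k -> Q (Gs i) (xs i) (xs i.+1))
  (Hs : serial_cond k Gs xs) (Hu : graph_union G k Gs).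

Local Notation EG := (gE G).
Local Notation VG := (gV G).

Lemma inter_lt i l v : i < l -> l < k -> v \in gV (Gs i) -> v \in gV (Gs l) ->
  l = i.+1 /\ v = xs l.
Proof.
case: Hs => H1 H2 il lk vi vl.
case: (ltnP i.+1 l) => h.
  have := H2 i l (ltn_trans il lk) lk h.
  by move/setP/(_ v); rewrite inE vi vl in_set0.
have e : l = i.+1 by apply/eqP; rewrite eqn_leq h il.
subst l; have := H1 i lk.
by move/setP/(_ v); rewrite !inE vi vl => /esym/eqP.
Qed.

Lemma xs_in0 i : i < k -> xs i \in gV (Gs i).
Proof. by move=> ik; apply: Q_u (HQ ik). Qed.

Lemma xs_in1 i : i < k -> xs i.+1 \in gV (Gs i).
Proof. by move=> ik; apply: Q_v (HQ ik). Qed.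

Lemma xs_inP i : 0 < i <= k -> xs i \in gV (Gs i.-1).
Proof. by move=> /andP [i0 ik]; have := xs_in1 (i:=i.-1); rewrite prednK //; apply; lia. Qed.

Lemma xs_notin p i : p.+1 < i -> i <= k -> xs i \notin gV (Gs p).
Proof.
move=> pi ik; apply/negP => h.
have i0 : 0 < i <= k by lia.
have [e1 e2] := inter_lt (i := p) (l := i.-1) (ltac:(lia)) (ltac:(lia)) h (xs_inP i0).
have := Q_neq (HQ (i := i.-1) (ltac:(lia))); rewrite prednK; last lia.
by rewrite e2 eqxx.
Qed.

Lemma xs_neq a b : a < b -> b <= k -> xs a != xs b.
Proof.
move=> ab bk; apply/negP => /eqP e.
have := xs_in0 (i := a) (ltac:(lia)); rewrite e => h.
case: (ltnP a.+1 b) => h2; first by move: (xs_notin h2 bk); rewrite h.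
have eb : b = a.+1 by lia.
subst b; move: (Q_neq (HQ (i := a) (ltac:(lia)))); by rewrite e eqxx.
Qed.

Lemma VG_cover x : x \in VG -> exists2 i, i < k & x \in gV (Gs i).
Proof. by case: Hu => -> _ /bigcupP [i _ h]; exists i. Qed.

Lemma EG_cover e : e \in EG -> exists2 i, i < k & e \in gE (Gs i).
Proof. by case: Hu => _ -> /bigcupP [i _ h]; exists i. Qed.

Lemma VG_sub i x : i < k -> x \in gV (Gs i) -> x \in VG.
Proof. by case: Hu => -> _ ik h; apply/bigcupP; exists (Ordinal ik). Qed.

Lemma EG_sub i e : i < k -> e \in gE (Gs i) -> e \in EG.
Proof. by case: Hu => _ -> ik h; apply/bigcupP; exists (Ordinal ik). Qed.

Lemma EG_subset i : i < k -> gE (Gs i) \subset EG.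
Proof. by move=> ik; apply/subsetP => e; apply: EG_sub. Qed.

Lemma edge_ends i x y : i < k -> [set x; y] \in gE (Gs i) ->
  x \in gV (Gs i) /\ y \in gV (Gs i).
Proof. by move=> ik; apply: Q_ends (HQ ik). Qed.

Lemma edge_disj i l e : i < k -> l < k -> e \in gE (Gs i) -> e \in gE (Gs l) -> i = l.
Proof.
move=> ik lk ei el.
have [x [y [xy ee xi yi]]] := Q_edge (HQ ik) ei.
rewrite ee in el; have [xl yl] := edge_ends lk el.
case: (ltngtP i l) => // h.
- have [_ e1] := inter_lt h lk xi xl; have [_ e2] := inter_lt h lk yi yl.
  by move: xy; rewrite e1 e2 eqxx.
- have [_ e1] := inter_lt h ik xl xi; have [_ e2] := inter_lt h ik yl yi.
  by move: xy; rewrite e1 e2 eqxx.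
Qed.

Lemma edge_sub i e : i < k -> e \in gE (Gs i) -> {subset e <= gV (Gs i)}.
Proof. by move=> ik; apply: Q_sub (HQ ik). Qed.

Lemma lift_avoid i c x y : i < k -> c \notin gV (Gs i) ->
  connect (adj (gE (Gs i))) x y -> connect (avoid EG c) x y.
Proof.
move=> ik ci; apply: (connect_hom (f := id)) => a b h; apply: connect1.
have [ai bi] := edge_ends ik h.
rewrite /avoid /adj (EG_sub ik h) /=.
by apply/andP; split; apply: contraNneq ci => <-.
Qed.

Lemma lift_avoid2 i c x y : i < k ->
  connect (avoid (gE (Gs i)) c) x y -> connect (avoid EG c) x y.
Proof. by move=> ik; apply: avoid_mono; apply: EG_subset. Qed.

Lemma lift_adj i x y : i < k ->
  connect (adj (gE (Gs i))) x y -> connect (adj EG) x y.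
Proof. by move=> ik; apply: adj_mono; apply: EG_subset. Qed.

Definition L i : {set V} := \bigcup_(m < i) gV (Gs m).

Lemma inL m i x : m < i -> x \in gV (Gs m) -> x \in L i.
Proof. by move=> mi h; apply/bigcupP; exists (Ordinal mi). Qed.

Lemma inLE i x : x \in L i -> exists2 m, m < i & x \in gV (Gs m).
Proof. by move/bigcupP => [m _ h]; exists m. Qed.

Lemma lowerA c m x : m < k -> (forall p, p < m -> c \notin gV (Gs p)) ->
  x \in gV (Gs m) -> (c \notin gV (Gs m)) \/ (c = xs m.+1 /\ x != c) ->
  connect (avoid EG c) (xs 0) x.
Proof.
move=> mk hp xm hc.
have h1 : connect (avoid EG c) (xs 0) (xs m).
  apply: (chain (n := m)) => // p pm.
  have pk : p < k by lia.
  apply: (lift_avoid pk); first exact: hp.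
  by apply: (Q_conn (HQ pk)); apply: (Q_v (HQ pk)).
apply: connect_trans h1 _.
case: hc => [cm|[-> xc]].
  exact: (lift_avoid mk cm (Q_conn (HQ mk) xm)).
exact: (lift_avoid2 mk (Q_avl (HQ mk) xm xc)).
Qed.

Lemma LsubA c i x : i <= k -> c \notin L i -> x \in L i ->
  connect (avoid EG c) (xs 0) x.
Proof.
move=> ik cL /inLE [m mi xm].
apply: (lowerA (m := m)) => //; first lia.
  by move=> p pm; apply: contra cL; apply: inL; lia.
by left; apply: contra cL; apply: inL.
Qed.

Lemma LA i x : 0 < i <= k -> x \in L i -> x != xs i ->
  connect (avoid EG (xs i)) (xs 0) x.
Proof.
move=> /andP [i0 ik] /inLE [m mi xm] xi.
apply: (lowerA (m := m)) => //; first lia.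
  by move=> p pm; apply: xs_notin; lia.
case: (ltnP m.+1 i) => h; first by left; apply: xs_notin.
have -> : i = m.+1 by lia.
by right; split => //; have -> : m.+1 = i by lia.
Qed.

Lemma AupL i x : 0 < i <= k -> connect (avoid EG (xs i)) (xs 0) x ->
  x \in L i /\ x != xs i.
Proof.
move=> /andP [i0 ik] h.
pose P := fun z => (z \in L i) && (z != xs i).
suff: P x by case/andP.
have base : P (xs 0).
  by rewrite /P (inL i0 (xs_in0 (i:=0) (ltac:(lia)))) xs_neq.
apply: (connect_inv (P := P) _ h base).
move=> a b /andP [/andP [ab _] bi] /andP [aL ai]; rewrite /P bi andbT.
have [m mk em] := EG_cover ab; have [am bm] := edge_ends mk em.
case: (ltnP m i) => hmi; first exact: inL bm.
have [p pi ap] := inLE aL.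
have [e1 e2] := inter_lt (ltac:(lia) : p < m) mk ap am.
have emi : m = i by lia.
by move: ai; rewrite e2 emi eqxx.
Qed.

Lemma conn_full x : x \in VG -> connect (adj EG) (xs 0) x.
Proof.
move=> /VG_cover [m mk xm].
have h1 : connect (adj EG) (xs 0) (xs m).
  apply: (chain (n := m)) => // p pm.
  have pk : p < k by lia.
  apply: (lift_adj pk).
  by apply: (Q_conn (HQ pk)); apply: (Q_v (HQ pk)).
apply: connect_trans h1 _.
exact: (lift_adj mk (Q_conn (HQ mk) xm)).
Qed.

Lemma VG_L : VG = L k.
Proof. by case: Hu. Qed.

End Serial.


Lemma bigcup_rev (T : finType) k (A : nat -> {set T}) :
  \bigcup_(i < k) A i = \bigcup_(i < k) A (k.-1 - i).
Proof.
apply/setP => x; apply/bigcupP/bigcupP => [[i _ h]|[i _ h]];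
  exists (rev_ord i) => //=.
  by have -> : k.-1 - (k - i.+1) = i by have := ltn_ord i; lia.
by have -> : k - i.+1 = k.-1 - i by have := ltn_ord i; lia.
Qed.

Lemma rev_serial (V : finType) (G : graph V) k Gs xs :
  (forall i, i < k -> Q (Gs i) (xs i) (xs i.+1)) -> serial_cond k Gs xs ->
  graph_union G k Gs ->
  [/\ (forall i, i < k -> Q (Gs (k.-1 - i)) (xs (k - i)) (xs (k - i.+1))),
     serial_cond k (fun i => Gs (k.-1 - i)) (fun i => xs (k - i)) &
     graph_union G k (fun i => Gs (k.-1 - i))].
Proof.
move=> HQ [H1 H2] [Hv He]; split.
- move=> i ik; have h := Q_sym (HQ (k.-1 - i) (ltac:(lia))).
  have e1 : (k.-1 - i).+1 = k - i by lia.
  have e2 : k - i.+1 = k.-1 - i by lia.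
  by rewrite e2; rewrite e1 in h.
- split.
  + move=> i ik /=.
    have := H1 (k.-1 - i.+1) (ltac:(lia)).
    have e1 : (k.-1 - i.+1).+1 = k.-1 - i by lia.
    have e2 : k - i.+1 = k.-1 - i by lia.
    have e3 : k - i.+2 = k.-1 - i.+1 by lia.
    by rewrite e1 e2 setIC.
  + move=> i j ik jk ij /=.
    by rewrite setIC; apply: H2; lia.
- split; [rewrite Hv; exact: (bigcup_rev k (fun i => gV (Gs i)))|].
  rewrite He; exact: (bigcup_rev k (fun i => gE (Gs i))).
Qed.

Lemma Q_serial (V : finType) (G : graph V) k Gs xs : 0 < k ->
  (forall i, i < k -> Q (Gs i) (xs i) (xs i.+1)) -> serial_cond k Gs xs ->
  graph_union G k Gs -> Q G (xs 0) (xs k).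
Proof.
move=> k0 HQ Hs Hu.
have avl : forall (Gs : nat -> graph V) xs,
  (forall i, i < k -> Q (Gs i) (xs i) (xs i.+1)) -> serial_cond k Gs xs ->
  graph_union G k Gs ->
  forall x, x \in gV G -> x != xs k -> connect (avoid (gE G) (xs k)) (xs 0) x.
  move=> Gs' xs' HQ' Hs' Hu' x xV xk.
  apply: (LA HQ' Hs' Hu') => //; first by rewrite k0 leqnn.
  by rewrite -(VG_L Hu').
split.
- by apply: (xs_neq HQ Hs).
- exact: (VG_sub Hu k0 (xs_in0 HQ k0)).
- by apply: (VG_sub Hu (i := k.-1)); [lia | apply: (xs_inP HQ); lia].
- move=> e /(EG_cover Hu) [i ik ei].
  have [x [y [xy ee xi yi]]] := Q_edge (HQ i ik) ei.
  by exists x, y; split => //; apply: (VG_sub Hu ik).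
- exact: (conn_full HQ Hu).
- exact: (avl _ _ HQ Hs Hu).
- have [HQ' Hs' Hu'] := rev_serial HQ Hs Hu.
  move=> x xV x0.
  have := avl _ _ HQ' Hs' Hu' x xV; rewrite subnn subn0; apply => //.
Qed.

Lemma osp_Q (V : finType) (H : graph V) u v : osp H u v -> Q H u v.
Proof.
elim => {H u v}.
- move=> s t st; split => //=.
  + exact: set21.
  + exact: set22.
  + move=> e; rewrite in_set1 => /eqP ->; exists s, t; split => //.
    * exact: set21.
    * exact: set22.
  + move=> x; rewrite in_set2 => /orP [] /eqP ->; first exact: connect0.
    by apply: connect1; rewrite /adj set11.
  + move=> x; rewrite in_set2 => /orP [] /eqP ->; first by move=> _; apply: connect0.
    by rewrite eqxx.
  + move=> x; rewrite in_set2 => /orP [] /eqP ->; first by rewrite eqxx.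
    by move=> _; apply: connect0.
- move=> G s t k Gs xs k2 e0 ek _ IH Hs Hu; rewrite -e0 -ek.
  by apply: (Q_serial (ltnW k2) IH Hs Hu).
- move=> G s t k Gs k2 _ IH _ Hu.
  have k0 : 0 < k by lia.
  have Q0 := IH 0 k0.
  split.
  + exact: Q_neq Q0.
  + exact: (VG_sub Hu k0 (Q_u Q0)).
  + exact: (VG_sub Hu k0 (Q_v Q0)).
  + move=> e /(EG_cover Hu) [i ik ei].
    have [x [y [xy ee xi yi]]] := Q_edge (IH i ik) ei.
    by exists x, y; split => //; apply: (VG_sub Hu ik).
  + move=> x /(VG_cover Hu) [i ik xi].
    exact: (lift_adj Hu ik (Q_conn (IH i ik) xi)).
  + move=> x /(VG_cover Hu) [i ik xi] xt.
    exact: (lift_avoid2 Hu ik (Q_avl (IH i ik) xi xt)).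
  + move=> x /(VG_cover Hu) [i ik xi] xt.
    exact: (lift_avoid2 Hu ik (Q_avr (IH i ik) xi xt)).
Qed.


Lemma aut_avoid (V : finType) (H : graph V) u v (s : {perm V}) c x y :
  aut_or H u v s -> connect (avoid (gE H) c) x y ->
  connect (avoid (gE H) (s c)) (s x) (s y).
Proof.
move=> hA; apply: (connect_hom (f := fun z => s z)) => a b /andP [/andP [ab ac] bc].
apply: connect1; rewrite /avoid /adj -imset_pair (aut_mapE hA ab) /=.
by rewrite !(inj_eq perm_inj) ac bc.
Qed.

Section Key.
Variable V : finType.
Variables (G : graph V) (k : nat) (Gs : nat -> graph V) (xs : nat -> V).
Hypotheses (HQ : forall i, i < k -> Q (Gs i) (xs i) (xs i.+1))
  (Hs : serial_cond k Gs xs) (Hu : graph_union G k Gs).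

Local Notation EG := (gE G).
Local Notation VG := (gV G).

Definition A c : {set V} := [set x | connect (avoid EG c) (xs 0) x].

Lemma cardA (s : {perm V}) c : aut_or G (xs 0) (xs k) s -> #|A (s c)| <= #|A c|.
Proof.
move=> hA; have hAi := aut_inv hA.
rewrite -(card_imset (A (s c)) (@perm_inj _ (s^-1)%g)).
apply: subset_leq_card; apply/subsetP => y /imsetP [z zA ->].
rewrite /A inE in zA; rewrite /A inE.
have := aut_avoid hAi zA; rewrite permK.
by case: hAi => _ [_ [-> _]].
Qed.

Lemma keyL (s : {perm V}) i : aut_or G (xs 0) (xs k) s -> 0 < i <= k ->
  s (xs i) \in L Gs i.
Proof.
move=> hA /andP [i0 ik]; apply/negPn/negP => nL.
have h1 : L Gs i \subset A (s (xs i)).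
  by apply/subsetP => x xL; rewrite /A inE; apply: (LsubA HQ Hu ik nL xL).
have h2 : A (xs i) \subset L Gs i :\ xs i.
  apply/subsetP => x; rewrite /A inE => hx.
  have [a b] := AupL HQ Hs Hu (i := i) (ltac:(lia)) hx.
  by rewrite !inE a b.
have h3 : xs i \in L Gs i.
  by apply: (inL (m := i.-1)); [lia | apply: (xs_inP HQ); lia].
have c1 := subset_leq_card h1; have c2 := subset_leq_card h2.
have c3 := cardA (xs i) hA.
move: (cardsD1 (xs i) (L Gs i)); rewrite h3 => c4.
lia.
Qed.

Lemma keyV (s : {perm V}) i v : aut_or G (xs 0) (xs k) s ->
  (forall j, j <= k -> s (xs j) = xs j) -> i < k -> v \in gV (Gs i) ->
  s v \in L Gs i.+1.
Proof.
move=> hA hfix ik vi.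
case: (eqVneq v (xs i.+1)) => [->|vx].
  by rewrite hfix // (inL (m := i)) //; apply: (xs_in1 HQ).
have := LA HQ Hs Hu (i := i.+1) (ltac:(lia)) (inL (ltnSn i) vi) vx.
move/(aut_avoid hA); rewrite !hfix // => h.
by have [] := AupL HQ Hs Hu (i := i.+1) (ltac:(lia)) h.
Qed.

End Key.

Lemma fix_xs (V : finType) (G : graph V) k Gs xs (s : {perm V}) :
  (forall i, i < k -> Q (Gs i) (xs i) (xs i.+1)) -> serial_cond k Gs xs ->
  graph_union G k Gs -> aut_or G (xs 0) (xs k) s ->
  forall i, i <= k -> s (xs i) = xs i.
Proof.
move=> HQ Hs Hu hA i ik.
case: (posnP i) => [->|i0]; first by case: hA => _ [_ [-> _]].
case: (eqVneq i k) => [->|ink]; first by case: hA => _ [_ [_ ->]].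
have [p pi hp] := inLE (keyL HQ Hs Hu hA (ltac:(lia) : 0 < i <= k)).
have [HQ' Hs' Hu'] := rev_serial HQ Hs Hu.
have hA' : aut_or G (xs (k - 0)) (xs (k - k)) s by rewrite subn0 subnn; apply: aut_symm.
have := keyL HQ' Hs' Hu' (i := k - i) hA' (ltac:(lia)).
have -> : k - (k - i) = i by lia.
move/inLE => [m mi hm].
have [e1 e2] := inter_lt Hs (i := p) (l := k.-1 - m) (ltac:(lia)) (ltac:(lia)) hp hm.
by rewrite e2; congr xs; lia.
Qed.

Lemma aut_restr (V : finType) (G : graph V) k Gs xs (s : {perm V}) :
  (forall i, i < k -> Q (Gs i) (xs i) (xs i.+1)) -> serial_cond k Gs xs ->
  graph_union G k Gs -> aut_or G (xs 0) (xs k) s ->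
  forall i, i < k -> aut_or (Gs i) (xs i) (xs i.+1) s.
Proof.
move=> HQ Hs Hu hA i ik.
have hfix := fix_xs HQ Hs Hu hA.
have [HQ' Hs' Hu'] := rev_serial HQ Hs Hu.
have hA' : aut_or G (xs (k - 0)) (xs (k - k)) s by rewrite subn0 subnn; apply: aut_symm.
have hfix' : forall j, j <= k -> s (xs (k - j)) = xs (k - j).
  by move=> j jk; apply: hfix; lia.
have hV : forall v, v \in gV (Gs i) -> s v \in gV (Gs i).
  move=> v vi.
  have [p pi hp] := inLE (keyV HQ Hs Hu hA hfix ik vi).
  have vi' : v \in gV (Gs (k.-1 - (k.-1 - i))) by have -> : k.-1 - (k.-1 - i) = i by lia.
  have [m mi hm] := inLE (keyV HQ' Hs' Hu' hA' hfix' (i := k.-1 - i) (ltac:(lia)) vi').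
  case: (eqVneq p i) => [<-|pni] //.
  case: (eqVneq (k.-1 - m) i) => [<-|qni] //.
  have [e1 _] := inter_lt Hs (i := p) (l := k.-1 - m) (ltac:(lia)) (ltac:(lia)) hp hm.
  lia.
have hVe : s @: gV (Gs i) = gV (Gs i).
  apply/eqP; rewrite eqEcard card_imset; last exact: perm_inj.
  rewrite leqnn andbT; apply/subsetP => y /imsetP [v vi ->]; exact: hV.
split; [exact: hVe | split; [| split; apply: hfix; lia]].
apply/eqP; rewrite eqEcard card_imset; last exact: imset_inj perm_inj.
rewrite leqnn andbT; apply/subsetP => y /imsetP [e ei ->].
have [x [z [xz ee xi zi]]] := Q_edge (HQ i ik) ei.
have := aut_mapE hA (EG_sub Hu ik ei).
move/(EG_cover Hu) => [m mk em].
have sxi := hV _ xi; have szi := hV _ zi.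
move: em; rewrite ee imset_pair => em.
have [xm zm] := edge_ends HQ mk em.
case: (eqVneq m i) => [emi|mi]; first by subst m.
have sxz : s x != s z by rewrite (inj_eq perm_inj).
case: (ltngtP m i) => h //.
- have [_ e1] := inter_lt Hs h ik xm sxi; have [_ e2] := inter_lt Hs h ik zm szi.
  by move: sxz; rewrite e1 e2 eqxx.
- have [_ e1] := inter_lt Hs h mk sxi xm; have [_ e2] := inter_lt Hs h mk szi zm.
  by move: sxz; rewrite e1 e2 eqxx.
- by move: mi; rewrite h eqxx.
Qed.


Lemma acyclic_sub (V : finType) (F1 F2 : {set {set V}}) :
  F1 \subset F2 -> acyclic F2 -> acyclic F1.
Proof.
move=> sF ac e eF x y ee xy; apply: contraNN (ac e (subsetP sF _ eF) x y ee xy).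
by apply: adj_mono; apply: setSD.
Qed.

Lemma act_sub_bigcup (V : finType) (s : {perm V}) (Fs : nat -> {set {set V}}) n :
  act_sub s (\bigcup_(i < n) Fs i) = \bigcup_(i < n) act_sub s (Fs i).
Proof.
apply/setP => y; apply/imsetP/bigcupP.
  by case=> e /bigcupP [i _ ei] ->; exists i => //; apply/imsetP; exists e.
by case=> i _ /imsetP [e ei ->]; exists e => //; apply/bigcupP; exists i.
Qed.

Section Trees.
Variable V : finType.
Variables (G : graph V) (k : nat) (Gs : nat -> graph V) (xs : nat -> V).
Hypotheses (HQ : forall i, i < k -> Q (Gs i) (xs i) (xs i.+1))
  (Hs : serial_cond k Gs xs) (Hu : graph_union G k Gs).

Local Notation EG := (gE G).
Local Notation VG := (gV G).

Definition r l v := if v \in gV (Gs l) then v else if v \in L Gs l then xs l else xs l.+1.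

Lemma retr_id l v : v \in gV (Gs l) -> r l v = v.
Proof. by rewrite /r => ->. Qed.

Lemma retr_val l m u : l < k -> m < k -> m != l -> u \in gV (Gs m) ->
  r l u = if m < l then xs l else xs l.+1.
Proof.
move=> lk mk ml um; rewrite /r.
case: ifP => ul.
  case: (ltngtP m l) => h.
  - by have [_ ->] := inter_lt Hs h lk um ul.
  - by have [-> ->] := inter_lt Hs h mk ul um.
  - by move: ml; rewrite h eqxx.
case: ifP => uL.
  case: (ltnP m l) => h //.
  have [p pl up] := inLE uL.
  have [e1 _] := inter_lt Hs (i := p) (l := m) (ltac:(lia)) mk up um.
  have : m != l by [].
  lia.
case: (ltnP m l) => h //.
by move: uL; rewrite (inL h um).
Qed.

Lemma retr_same l m u w : l < k -> m < k -> m != l -> u \in gV (Gs m) ->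
  w \in gV (Gs m) -> r l u = r l w.
Proof. by move=> lk mk ml um wm; rewrite (retr_val lk mk ml um) (retr_val lk mk ml wm). Qed.

Lemma retr_conn l (T Tl : {set {set V}}) x y : l < k -> T \subset EG ->
  (forall e, e \in T -> e \in gE (Gs l) -> e \in Tl) ->
  x \in gV (Gs l) -> y \in gV (Gs l) -> connect (adj T) x y -> connect (adj Tl) x y.
Proof.
move=> lk sT hT xl yl.
rewrite -{2}(retr_id xl) -{2}(retr_id yl).
apply: (connect_hom (f := r l)) => a b ab.
have [m mk em] := EG_cover Hu (subsetP sT _ ab).
have [am bm] := edge_ends HQ mk em.
case: (eqVneq m l) => [eml|ml].
  subst m; rewrite !retr_id //; apply: connect1; exact: hT.
by rewrite (retr_same lk mk ml am bm); apply: connect0.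
Qed.

Lemma union_span (Tr : nat -> {set {set V}}) :
  (forall i, i < k -> spanning_tree (Gs i) (Tr i)) ->
  spanning_tree G (\bigcup_(i < k) Tr i).
Proof.
move=> hT.
have sub : forall i, i < k -> Tr i \subset \bigcup_(i < k) Tr i.
  by move=> i ik; apply/subsetP => e ei; apply/bigcupP; exists (Ordinal ik).
have sE : \bigcup_(i < k) Tr i \subset EG.
  apply/subsetP => e /bigcupP [i _ ei].
  have [sTi _] := hT i (ltn_ord i).
  exact: (EG_sub Hu (ltn_ord i) (subsetP sTi _ ei)).
split; [exact: sE | split].
- move=> e /bigcupP [l _ el] x y ee xy.
  have lk := ltn_ord l.
  have [sTl [acl _]] := hT l lk.
  have eE := subsetP sTl _ el.
  rewrite ee in eE; have [xl yl] := edge_ends HQ lk eE.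
  apply/negP => hc.
  have hc' : connect (adj (Tr l :\ e)) x y.
    apply: (retr_conn lk _ _ xl yl hc).
      by apply: subset_trans sE; apply: subD1set.
    move=> f; rewrite !inE => /andP [fe /bigcupP [m _ fm]] fl.
    have [sTm _] := hT m (ltn_ord m).
    have em := edge_disj HQ Hs (ltn_ord m) lk (subsetP sTm _ fm) fl.
    by rewrite fe /=; move: fm; rewrite em.
  by rewrite (negbTE (acl e el x y ee xy)) in hc'.
- have c0 : forall x, x \in VG -> connect (adj (\bigcup_(i < k) Tr i)) (xs 0) x.
    move=> x /(VG_cover Hu) [m mk xm].
    have h1 : connect (adj (\bigcup_(i < k) Tr i)) (xs 0) (xs m).
      apply: (chain (n := m)) => // p pm.
      have pk : p < k by lia.
      apply: (adj_mono (sub p pk)).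
      have [_ [_ cp]] := hT p pk.
      by apply: cp; [apply: (xs_in0 HQ) | apply: (xs_in1 HQ)].
    apply: connect_trans h1 _; apply: (adj_mono (sub m mk)).
    have [_ [_ cm]] := hT m mk.
    by apply: cm => //; apply: (xs_in0 HQ).
  move=> x y xV yV; apply: connect_trans (c0 y yV).
  by rewrite connect_adjC; apply: c0.
Qed.

Lemma restr_span (T : {set {set V}}) l : spanning_tree G T -> l < k -> spanning_tree (Gs l) (T :&: gE (Gs l)).
Proof.
move=> [sT [acT cT]] lk; split; [exact: subsetIr | split].
  by apply: acyclic_sub acT; apply: subsetIl.
move=> x y xl yl.
apply: (retr_conn lk sT _ xl yl (cT _ _ (VG_sub Hu lk xl) (VG_sub Hu lk yl))).
by move=> e eT el; rewrite inE eT el.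
Qed.

Lemma act_sub_agree (s s' : {perm V}) (F : {set {set V}}) i : i < k -> F \subset gE (Gs i) ->
  (forall v, v \in gV (Gs i) -> s v = s' v) -> act_sub s F = act_sub s' F.
Proof.
move=> ik sF hs; apply: eq_in_imset => e eF.
apply: eq_in_imset => v ve; apply: hs.
exact: (edge_sub HQ ik (subsetP sF _ eF)).
Qed.

Lemma act_sub_restr (s : {perm V}) (F : {set {set V}}) i : aut_or G (xs 0) (xs k) s -> F \subset EG ->
  i < k -> act_sub s F :&: gE (Gs i) = act_sub s (F :&: gE (Gs i)).
Proof.
move=> hA sF ik.
have hR := aut_restr HQ Hs Hu hA.
apply/setP => y; rewrite inE; apply/andP/imsetP.
  case=> /imsetP [f fF ->] yi.
  have [m mk fm] := EG_cover Hu (subsetP sF _ fF).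
  have := aut_mapE (hR m mk) fm => ym.
  have emi := edge_disj HQ Hs mk ik ym yi.
  by exists f => //; rewrite inE fF -emi fm.
case=> f; rewrite inE => /andP [fF fi] ->; split.
  by apply/imsetP; exists f.
exact: aut_mapE (hR i ik) fi.
Qed.

Lemma decomp (YF : nat -> {set {set V}}) i :
  (forall l, l < k -> YF l \subset gE (Gs l)) -> i < k ->
  (\bigcup_(l < k) YF l) :&: gE (Gs i) = YF i.
Proof.
move=> hY ik; apply/setP => y; rewrite inE; apply/andP/idP.
  case=> /bigcupP [l _ yl] yi.
  have := edge_disj HQ Hs (ltn_ord l) ik (subsetP (hY _ (ltn_ord l)) _ yl) yi.
  by move=> <-.
move=> yi; split; first by apply/bigcupP; exists (Ordinal ik).
exact: (subsetP (hY _ ik)).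
Qed.

Lemma F_decomp (F : {set {set V}}) : F \subset EG -> F = \bigcup_(i < k) (F :&: gE (Gs i)).
Proof.
move=> sF; apply/setP => y; apply/idP/bigcupP.
  move=> yF; have [i ik yi] := EG_cover Hu (subsetP sF _ yF).
  by exists (Ordinal ik) => //; rewrite inE yF.
by case=> i _; rewrite inE => /andP [].
Qed.

Lemma glue (ss : nat -> {perm V}) : 0 < k ->
  (forall i, i < k -> aut_or (Gs i) (xs i) (xs i.+1) (ss i)) ->
  exists s : {perm V}, aut_or G (xs 0) (xs k) s /\
    (forall i v, i < k -> v \in gV (Gs i) -> s v = ss i v).
Proof.
move=> k0 hA.
pose g v := if [pick i : 'I_k | v \in gV (Gs i)] is Some i then ss i v else v.
have fx : forall i, i < k -> ss i (xs i) = xs i /\ ss i (xs i.+1) = xs i.+1.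
  by move=> i ik; case: (hA i ik) => _ [_ [-> ->]].
have agree : forall i v, i < k -> v \in gV (Gs i) -> g v = ss i v.
  move=> i v ik vi; rewrite /g; case: pickP => [m /= vm|none]; last first.
    by have := none (Ordinal ik); rewrite /= vi.
  case: (ltngtP m i) => h.
  - have [e1 e2] := inter_lt Hs h ik vm vi.
    rewrite e2; have [_ f1] := fx m (ltn_ord m); have [f2 _] := fx i ik.
    by rewrite f2 e1 f1.
  - have [e1 e2] := inter_lt Hs h (ltn_ord m) vi vm.
    rewrite e2; have [f1 _] := fx m (ltn_ord m); have [_ f2] := fx i ik.
    by rewrite f1 e1 f2.
  - by rewrite h.
have out : forall v, v \notin VG -> g v = v.
  move=> v vV; rewrite /g; case: pickP => [m /= vm|] //.
  by move: vV; rewrite (VG_sub Hu (ltn_ord m) vm).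
have mapV : forall i v, i < k -> v \in gV (Gs i) -> ss i v \in gV (Gs i).
  by move=> i v ik; apply: aut_mapV (hA i ik).
have ginj : injective g.
  move=> a b.
  case: (boolP (a \in VG)) => aV; case: (boolP (b \in VG)) => bV.
  - have [i ik ai] := VG_cover Hu aV; have [l lk bl] := VG_cover Hu bV.
    rewrite (agree _ _ ik ai) (agree _ _ lk bl) => eq.
    have wi := mapV _ _ ik ai; have wl := mapV _ _ lk bl.
    case: (ltngtP i l) => h.
    + have wl' : ss i a \in gV (Gs l) by rewrite eq.
      have [e1 e2] := inter_lt Hs h lk wi wl'.
      have [_ f1] := fx i ik; have [f2 _] := fx l lk.
      have ea : a = xs l by apply: (@perm_inj _ (ss i)); rewrite e2 e1 f1.
      have eb : b = xs l by apply: (@perm_inj _ (ss l)); rewrite -eq e2 f2.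
      by rewrite ea eb.
    + have wi' : ss l b \in gV (Gs i) by rewrite -eq.
      have [e1 e2] := inter_lt Hs h ik wl wi'.
      have [_ f1] := fx l lk; have [f2 _] := fx i ik.
      have eb : b = xs i by apply: (@perm_inj _ (ss l)); rewrite e2 e1 f1.
      have ea : a = xs i by apply: (@perm_inj _ (ss i)); rewrite eq e2 f2.
      by rewrite ea eb.
    + by subst l; apply: perm_inj eq.
  - have [i ik ai] := VG_cover Hu aV.
    rewrite (agree _ _ ik ai) (out _ bV) => eq.
    by move: bV; rewrite -eq (VG_sub Hu ik (mapV _ _ ik ai)).
  - have [i ik bi] := VG_cover Hu bV.
    rewrite (agree _ _ ik bi) (out _ aV) => eq.
    by move: aV; rewrite eq (VG_sub Hu ik (mapV _ _ ik bi)).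
  - by rewrite (out _ aV) (out _ bV).
exists (perm ginj).
have agree' : forall i v, i < k -> v \in gV (Gs i) -> perm ginj v = ss i v.
  by move=> i v ik vi; rewrite permE; apply: agree.
split => //.
split; [|split; [|split]].
- apply/setP => y; apply/imsetP/idP.
    case=> v vV ->; have [i ik vi] := VG_cover Hu vV.
    by rewrite (agree' _ _ ik vi); apply: (VG_sub Hu ik); apply: mapV.
  move=> yV; have [i ik yi] := VG_cover Hu yV.
  have [hV _] := hA i ik.
  move: yi; rewrite -hV => /imsetP [z zi ->].
  by exists z; [apply: (VG_sub Hu ik) | rewrite (agree' _ _ ik zi)].
- apply/setP => y; apply/imsetP/idP.
    case=> e eE ->; have [i ik ei] := EG_cover Hu eE.
    rewrite (@eq_in_imset _ _ _ (ss i)); last first.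
      by move=> v ve; apply: agree' => //; apply: (edge_sub HQ ik ei).
    by apply: (EG_sub Hu ik); apply: aut_mapE (hA i ik) ei.
  move=> yE; have [i ik yi] := EG_cover Hu yE.
  have [_ [hE _]] := hA i ik.
  move: yi; rewrite -hE => /imsetP [z zi ->].
  exists z; first by apply: (EG_sub Hu ik).
  apply: eq_in_imset => v ve; apply/esym; apply: agree' => //.
  exact: (edge_sub HQ ik zi).
- by rewrite (agree' 0 _ k0 (xs_in0 HQ k0)); have [] := fx 0 k0.
- have kk : k.-1 < k by lia.
  have := xs_in1 HQ kk; rewrite prednK // => h.
  rewrite (agree' _ _ kk h); have [_] := fx _ kk; rewrite prednK //.
Qed.

End Trees.


Lemma tree_sub (V : finType) (H : graph V) F :
  spanning_tree H F \/ near_tree H F -> F \subset gE H.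
Proof.
case=> [[]|[T [e [[sT _] [_ ->]]]]] //.
by apply: subset_trans sT; apply: subD1set.
Qed.

Theorem theorem5p5 (V : finType) (G : graph V) (s t : V) (k : nat)
    (Gs : nat -> graph V) (xs : nat -> V)
    (Ts Ns : nat -> {set {set V}} -> Prop) :
  2 <= k -> xs 0 = s -> xs k = t ->
  (forall i, i < k -> osp (Gs i) (xs i) (xs i.+1)) ->
  serial_cond k Gs xs -> graph_union G k Gs ->
  (forall i, i < k -> ~ is_parallel (Gs i) (xs i) (xs i.+1)) ->
  (forall i, i < k ->
     orbit_transversal (Gs i) (xs i) (xs i.+1) (Ts i) (spanning_tree (Gs i))) ->
  (forall i, i < k ->
     orbit_transversal (Gs i) (xs i) (xs i.+1) (Ns i) (near_tree (Gs i))) ->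
  orbit_transversal G s t (combined k Ts Ns) (near_tree G).
Proof.
move=> k2 e0 ek Hosp Hs Hu _ HT HN; subst s t.
have HQ : forall i, i < k -> Q (Gs i) (xs i) (xs i.+1).
  by move=> i ik; apply: osp_Q; apply: Hosp.
have k0 : 0 < k by lia.
split.
- move=> X [j [XF [jk [NjX [TiX ->]]]]].
  have [Tj [e [Tjs [eTj XFj]]]] := (HN j jk).1 _ NjX.
  pose T' i := if i == j then Tj else XF i.
  have hT' : forall i, i < k -> spanning_tree (Gs i) (T' i).
    move=> i ik; rewrite /T'; case: eqP => [->|ne] //.
    exact: (HT i ik).1 _ (TiX i ik ne).
  have ej : e \in gE (Gs j) by case: Tjs => sT _; apply: (subsetP sT).
  exists (\bigcup_(i < k) T' i), e; split; [exact: (union_span HQ Hs Hu hT') | split].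
    by apply/bigcupP; exists (Ordinal jk) => //; rewrite /T' eqxx.
  apply/setP => f; apply/bigcupP/idP.
  + case=> i _ fi; rewrite !inE.
    case: (eqVneq (val i) j) => ij.
      move: fi; rewrite ij XFj !inE => /andP [fe fT]; rewrite fe /=.
      by apply/bigcupP; exists (Ordinal jk) => //; rewrite /T' eqxx.
    have fE : f \in gE (Gs i).
      have [sTi _] := (HT i (ltn_ord i)).1 _ (TiX i (ltn_ord i) (elimN eqP ij)).
      exact: (subsetP sTi).
    have fe : f != e.
      apply/eqP => fe; move: fE; rewrite fe => eE.
      by move: ij; rewrite /= (edge_disj HQ Hs (ltn_ord i) jk eE ej) eqxx.
    rewrite fe /=; apply/bigcupP; exists i => //.
    by rewrite /T' (negbTE ij).
  + rewrite !inE => /andP [fe /bigcupP [i _ fi]]; exists i => //.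
    move: fi; rewrite /T'; case: eqP => [ij|_] // fi.
    by rewrite ij XFj !inE fe fi.
- move=> F [T [e [Tsp [eT ->]]]].
  have [sT _] := Tsp.
  have [j jk ej] := EG_cover Hu (subsetP sT _ eT).
  pose P i := if i == j then Ns i else Ts i.
  pose PP i := if i == j then near_tree (Gs i) else spanning_tree (Gs i).
  pose Fi i := (T :\ e) :&: gE (Gs i).
  have hTr : forall i, i < k -> orbit_transversal (Gs i) (xs i) (xs i.+1) (P i) (PP i).
    by move=> i ik; rewrite /P /PP; case: eqP => _; [apply: HN | apply: HT].
  have hFi : forall i, i < k -> PP i (Fi i).
    move=> i ik; have sp := restr_span HQ Hs Hu Tsp ik.
    rewrite /PP /Fi; case: eqP => [eij|ne].
      subst i; exists (T :&: gE (Gs j)), e; split; first exact: sp.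
      split; first by rewrite inE eT ej.
      by apply/setP => f; rewrite !inE andbA.
    suff -> : (T :\ e) :&: gE (Gs i) = T :&: gE (Gs i) by [].
    apply/setP => f; rewrite !inE; case fi: (f \in gE (Gs i)); last by rewrite !andbF.
    case: (eqVneq f e) => [fe|//].
    by move: fi; rewrite fe => fi; case: ne; apply: (edge_disj HQ Hs ik jk fi ej).
  have sF : T :\ e \subset gE G by apply: subset_trans sT; apply: subD1set.
  have PPsub : forall i X, i < k -> PP i X -> X \subset gE (Gs i).
    move=> i X ik; rewrite /PP; case: eqP => _ h; apply: tree_sub; by [right|left].
  have charY : forall Y, combined k Ts Ns Y -> same_orbit G (xs 0) (xs k) Y (T :\ e) ->
      exists YF : nat -> {set {set V}}, Y = \bigcup_(i < k) YF i /\
        forall i, i < k -> P i (YF i) /\ same_orbit (Gs i) (xs i) (xs i.+1) (YF i) (Fi i).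
    move=> Y [jY [YF [jYk [NY [TY eY]]]]] [sg [hsg eYs]].
    have hR := aut_restr HQ Hs Hu hsg.
    have YFsub : forall l, l < k -> YF l \subset gE (Gs l).
      move=> l lk; apply: tree_sub; case: (eqVneq l jY) => [->|ne].
        by right; apply: (HN jY jYk).1.
      by left; apply: (HT l lk).1; apply: TY => //; apply/eqP.
    have hYF : forall i, i < k -> YF i = act_sub sg (Fi i).
      move=> i ik; rewrite -(decomp HQ Hs YFsub ik) -eY eYs.
      by apply: (act_sub_restr HQ Hs Hu hsg sF ik).
    have ejY : jY = j.
      apply/eqP/negP => /negP ne.
      have nY := (HN jY jYk).1 _ NY.
      have := hFi jY jYk; rewrite /PP (negbTE ne) => spF.
      have := span_aut (hR jY jYk) spF; rewrite -hYF // => spY.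
      exact: near_not_span (HQ jY jYk) nY spY.
    subst jY.
    exists YF; split => // i ik; split.
      rewrite /P; case: eqP => [->//|ne]; exact: TY.
    by exists sg; split; [apply: hR | apply: hYF].
  have ch : forall i, exists p : {set {set V}} * {perm V}, i < k ->
      P i p.1 /\ aut_or (Gs i) (xs i) (xs i.+1) p.2 /\ p.1 = act_sub p.2 (Fi i).
    move=> i; case: (ltnP i k) => ik; last by exists (set0, 1%g).
    have [X0 [[S0 [sg [hsg eX]]] _]] := (hTr i ik).2 _ (hFi i ik).
    by exists (X0, sg).
  pose f := fun i => proj1_sig (@constructive_indefinite_description _ _ (ch i)).
  have hf : forall i, i < k -> P i (f i).1 /\ aut_or (Gs i) (xs i) (xs i.+1) (f i).2 /\
      (f i).1 = act_sub (f i).2 (Fi i).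
    by move=> i ik; apply: (proj2_sig (@constructive_indefinite_description _ _ (ch i))).
  have [sg [hsg hag]] := glue HQ Hs Hu (ss := fun i => (f i).2) k0 (fun i ik => (hf i ik).2.1).
  have FiD : T :\ e = \bigcup_(i < k) Fi i by exact: (F_decomp Hu sF).
  exists (\bigcup_(i < k) (f i).1); split; first split.
  + exists j, (fun i => (f i).1); split => //; split.
      by have := (hf j jk).1; rewrite /P eqxx.
    split => // i ik ij; have := (hf i ik).1; rewrite /P.
    by case: eqP.
  + exists sg; split => //.
    rewrite FiD act_sub_bigcup; apply: eq_bigr => i _.
    rewrite (hf i (ltn_ord i)).2.2; apply/esym.
    apply: (act_sub_agree HQ (ltn_ord i)); first by apply/subsetP => x; rewrite inE => /andP [].
    by move=> v vi; apply: hag.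
  + move=> Y [cY oY].
    have [YF [eY hY]] := charY Y cY oY.
    rewrite eY; apply: eq_bigr => i _.
    have ik := ltn_ord i.
    have [PY oYi] := hY i ik.
    have [Pf [af ef]] := hf i ik.
    have oF : same_orbit (Gs i) (xs i) (xs i.+1) (f i).1 (Fi i) by exists (f i).2.
    by rewrite (trans_uniq (hTr i ik) (hFi i ik) PY oYi Pf oF).
Qed.
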